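(* Let $T$ be the semi-infinite matrix $T_{jk}=\binom{j+k}{j}$, $j,k\in\mathbb N$. Let $J$ and $\widetilde J$ be the semi-infinite symmetric tridiagonal matrices with diagonal entries $J_{nn}=b_n$, $\widetilde J_{nn}=\beta_n$ and off-diagonal entries $J_{n-1,n}=J_{n,n-1}=a_n$, $\widetilde J_{n-1,n}=\widetilde J_{n,n-1}=\alpha_n$ ($n\ge1$), all other entries zero, where $$a_n=n,\quad b_n=-n,\quad \alpha_n=n^3,\quad \beta_n=-2n^3-3n^2-2n.$$ Then $TJ=JT$ and $T\widetilde J=\widetilde JT$.
   Context: Matrix indices start at $0$; products of a semi-infinite band matrix with $T$ are finite sums entrywise. *)

(* Defs.v *)
From mathcomp Require Import all_boot all_order all_algebra.
Set Implicit Arguments. Unset Strict Implicit. Unset Printing Implicit Defensive.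
Import Order.TTheory GRing.Theory Num.Theory.
Local Open Scope ring_scope.

Definition imat := nat -> nat -> int.

Definition Tmat : imat := fun j k => ('C(j + k, j))%:Z.

Definition tridiag (a b : nat -> int) : imat := fun i j =>
  if i == j then b i
  else if i.+1 == j then a j
  else if j.+1 == i then a i
  else 0.

(* Products of a semi-infinite matrix with a matrix whose column k
   (resp. row j) is supported in indices < k+2 (resp. < j+2),
   e.g. a tridiagonal one: the entrywise sum is finite and is
   computed exactly by truncating at the support. *)
Definition mul_band_r (A B : imat) : imat := fun j k =>
  \sum_(i < k.+2) A j i * B i k.
Definition mul_band_l (B A : imat) : imat := fun j k =>
  \sum_(i < j.+2) B j i * A i k.

Definition a_ (n : nat) : int := n%:Z.
Definition b_ (n : nat) : int := - n%:Z.
Definition alpha_ (n : nat) : int := (n%:Z) ^+ 3.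
Definition beta_ (n : nat) : int :=
  - 2 * (n%:Z) ^+ 3 - 3 * (n%:Z) ^+ 2 - 2 * n%:Z.

Definition Jmat : imat := tridiag a_ b_.
Definition Jtmat : imat := tridiag alpha_ beta_.

(* Main.v *)
Require Import Defs.
From mathcomp Require Import all_boot all_order all_algebra.
From mathcomp Require Import zify ring.
Import Order.TTheory GRing.Theory Num.Theory.
Local Open Scope ring_scope.

Lemma band_r (a b : nat -> int) (A : imat) j k : a 0%N = 0 ->
  mul_band_r A (tridiag a b) j k =
  A j k.-1 * a k + A j k * b k + A j k.+1 * a k.+1.
Proof.
move=> a0; rewrite /mul_band_r /tridiag !big_ord_recr /=.
have -> : (k.+1 == k) = false by apply/eqP; lia.
have -> : (k.+2 == k) = false by apply/eqP; lia.
rewrite eqxx.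
case: k => [|q] /=.
  by rewrite big_ord0 a0 !mulr0 !add0r.
rewrite big_ord_recr /= eqxx.
have -> : (q == q.+1) = false by apply/eqP; lia.
rewrite big1 ?add0r ?addrA ?eqxx // => -[i hi] _ /=.
have -> : (i == q.+1) = false by apply/eqP; lia.
have -> : (i.+1 == q.+1) = false by apply/eqP; lia.
have -> : (q.+2 == i) = false by apply/eqP; lia.
by rewrite mulr0.
Qed.

Lemma band_l (a b : nat -> int) (A : imat) j k : a 0%N = 0 ->
  mul_band_l (tridiag a b) A j k =
  a j * A j.-1 k + b j * A j k + a j.+1 * A j.+1 k.
Proof.
move=> a0; rewrite /mul_band_l /tridiag !big_ord_recr /=.
have -> : (j == j.+1) = false by apply/eqP; lia.
rewrite eqxx.
case: j => [|q] /=.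
  by rewrite big_ord0 a0 !mul0r !add0r.
rewrite big_ord_recr /=.
have -> : (q.+1 == q) = false by apply/eqP; lia.
have -> : (q.+2 == q) = false by apply/eqP; lia.
rewrite eqxx.
rewrite big1 ?add0r ?addrA ?eqxx // => -[i hi] _ /=.
have -> : (q.+1 == i) = false by apply/eqP; lia.
have -> : (q.+2 == i) = false by apply/eqP; lia.
have -> : (i.+1 == q.+1) = false by apply/eqP; lia.
by rewrite mul0r.
Qed.

Lemma binQ x y : ('C(x + y, x)%:R : rat) = (x + y)`!%:R / (x`!%:R * y`!%:R).
Proof.
have h := bin_fact (leq_addr y x); rewrite addKn in h.
rewrite -h natrM natrM mulfK // mulf_neq0 // pnatr_eq0 -lt0n fact_gt0 //.
Qed.

Lemma factQ n : (n`!%:R : rat) != 0.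
Proof. by rewrite pnatr_eq0 -lt0n fact_gt0. Qed.

Lemma nz1 m : (1 + m%:R : rat) != 0.
Proof. by rewrite -[1]/(1%:R) -natrD pnatr_eq0. Qed.
Lemma nz2 m : (2 + m%:R : rat) != 0.
Proof. by rewrite -natrD pnatr_eq0. Qed.

Lemma TQ j k : ((Tmat j k)%:~R : rat) = (j + k)`!%:R / (j`!%:R * k`!%:R).
Proof. by rewrite /Tmat -binQ. Qed.

Lemma natzQ n : ((n%:Z)%:~R : rat) = n%:R.
Proof. by []. Qed.

Lemma partJ j k : mul_band_r Tmat Jmat j k = mul_band_l Jmat Tmat j k.
Proof.
rewrite band_r // band_l // /a_ /b_.
apply: (@intr_inj rat).
rewrite !intrD !intrM ?intrN.
case: k => [|q]; case: j => [|p].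
all: rewrite ?natzQ ?binQ ?succnK ?add0n ?addn0 ?addSn ?addnS ?factS ?natrM ?add0n ?addn0.

all: rewrite ?fact0 ?mul1r ?mulr1.
- by [].
all: field; by rewrite ?factQ ?nz1 ?nz2.
Qed.

Lemma partJt j k : mul_band_r Tmat Jtmat j k = mul_band_l Jtmat Tmat j k.
Proof.
rewrite band_r // band_l // /alpha_ /beta_.
apply: (@intr_inj rat).
rewrite !(intrD, intrM, intrN, intrB, rmorphXn).
case: k => [|q]; case: j => [|p].
all: rewrite ?natzQ ?binQ ?succnK ?add0n ?addn0 ?addSn ?addnS ?factS ?natrM ?add0n ?addn0.
all: rewrite ?fact0 ?mul1r ?mulr1.
- by [].
all: field; by rewrite ?factQ ?nz1 ?nz2.
Qed.

Theorem theorem3p1 :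
  (forall j k : nat, mul_band_r Tmat Jmat j k = mul_band_l Jmat Tmat j k) /\
  (forall j k : nat, mul_band_r Tmat Jtmat j k = mul_band_l Jtmat Tmat j k).
Proof. split; [exact: partJ | exact: partJt]. Qed.
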